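(* Let $\mathcal{G}$ be a GBS graph of groups and $w=a_0^{k_0}y_1a_1^{k_1}\cdots y_na_n^{k_n}$ a $\mathcal{G}$-factorization. Define the relation $\sim_{\mathcal{C}}$ on $\{1,\dots,n\}$ by $i\sim_{\mathcal{C}}j$ iff $y_i=\bar y_j$ and: if $i<j$ then $\rho(w_{i,j-1})=0$ and $k_{i,j-1}\in\beta_{y_i}\mathbb{Z}$; if $j<i$ then $\rho(w_{j,i-1})=0$ and $k_{j,i-1}\in\beta_{y_j}\mathbb{Z}$. If $i\sim_{\mathcal{C}}\ell$, $\ell\sim_{\mathcal{C}}m$ and $m\sim_{\mathcal{C}}j$, then $i\sim_{\mathcal{C}}j$.
   Context: $\mathcal{G}$ consists of a finite connected graph $Y$ (vertices $V(Y)$, edges $E(Y)$, maps $\iota,\tau:E(Y)\to V(Y)$, fixed-point-free involution $y\mapsto\bar y$ with $\iota(\bar y)=\tau(y)$) and integers $\alpha_y,\beta_y\in\mathbb{Z}\setminus\{0\}$ with $\alpha_y=\beta_{\bar y}$. A $\mathcal{G}$-factorization is a word $a_0^{k_0}y_1a_1^{k_1}\cdots y_na_n^{k_n}$ with $y_i\in E(Y)$, $a_i\in V(Y)$, $k_i\in\mathbb{Z}$, $\iota(y_i)=a_{i-1}$, $\tau(y_i)=a_i$ and $a_n=a_0$. For $0\le i\le j\le n$: $w_{i,j}=a_i^{k_i}y_{i+1}a_{i+1}^{k_{i+1}}\cdots y_ja_j^{k_j}$ and $k_{i,j}=\sum_{\nu=i}^{j}k_\nu\prod_{\mu=i+1}^{\nu}\alpha_{y_\mu}/\beta_{y_\mu}\in\mathbb{Q}$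 (so $k_{i,j}\in\beta\mathbb{Z}$ means $k_{i,j}$ is an integer multiple of $\beta$). Fix an orientation $D\subseteq E(Y)$ (containing exactly one of $y,\bar y$ for each edge $y$); $\rho$ maps words over $E(Y)\cup\{a^k\}$ to $\mathbb{Z}^D$ additively, with $\rho(a^k)=0$, $\rho(y)=e_y$ and $\rho(\bar y)=-e_y$ for $y\in D$ ($e_y$ the unit vector at $y$); i.e. $\rho$ counts exponent sums of edges. *)

(* Defs.v *)
From HB Require Import structures.
From mathcomp Require Import all_boot all_order all_algebra.
Set Implicit Arguments. Unset Strict Implicit. Unset Printing Implicit Defensive.
Import Order.TTheory GRing.Theory Num.Theory.
Local Open Scope ring_scope.

Definition graph_adj (V E : finType) (iota tau : E -> V) : rel V :=
  fun a b => [exists e, (iota e == a) && (tau e == b)].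

Definition is_GBS (V E : finType) (iota tau : E -> V) (bar : E -> E)
    (alpha beta : E -> int) : Prop :=
  (0 < #|V|)%N /\
  (forall u v, connect (graph_adj iota tau) u v) /\
  [/\ (forall y, bar (bar y) = y),
      (forall y, bar y != y),
      (forall y, iota (bar y) = tau y),
      (forall y, alpha y != 0 /\ beta y != 0)
    & (forall y, alpha y = beta (bar y))].

Definition is_orientation (E : finType) (bar : E -> E) (D : {set E}) : Prop :=
  forall y, (y \in D) = ~~ (bar y \in D).

(* A G-factorization a_0^{k_0} y_1 a_1^{k_1} ... y_n a_n^{k_n}, encoded by
   a : nat -> V (indices 0..n), y : nat -> E (indices 1..n), k : nat -> int
   (indices 0..n); values outside these ranges are irrelevant. *)
Definition is_factorization (V E : finType) (iota tau : E -> V)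
    (n : nat) (a : nat -> V) (y : nat -> E) : Prop :=
  (forall i, (1 <= i <= n)%N -> iota (y i) = a i.-1 /\ tau (y i) = a i)
  /\ a n = a 0%N.

Definition kk (E : finType) (alpha beta : E -> int) (y : nat -> E)
    (k : nat -> int) (i j : nat) : rat :=
  \sum_(i <= nu < j.+1)
     (k nu)%:~R * \prod_(i.+1 <= mu < nu.+1)
        ((alpha (y mu))%:~R / (beta (y mu))%:~R).

(* rho(w_{i,j}) in Z^D, represented as a function E -> int (zero off D):
   exponent sum of the edges y_{i+1}, ..., y_j. *)
Definition rho (E : finType) (bar : E -> E) (D : {set E}) (y : nat -> E)
    (i j : nat) : E -> int :=
  fun e => if e \in D then
             \sum_(i.+1 <= mu < j.+1)
               (((y mu == e) : nat)%:Z - ((y mu == bar e) : nat)%:Z)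
           else 0.

Definition rho_zero (E : finType) (bar : E -> E) (D : {set E}) (y : nat -> E)
    (i j : nat) : Prop := forall e, rho bar D y i j e = 0.

Definition in_multZ (q : rat) (b : int) : Prop := exists m : int, q = (m * b)%:~R.

Definition simC (E : finType) (bar : E -> E) (alpha beta : E -> int)
    (D : {set E}) (n : nat) (y : nat -> E) (k : nat -> int) (i j : nat) : Prop :=
  [/\ (1 <= i <= n)%N, (1 <= j <= n)%N, y i = bar (y j),
      ((i < j)%N -> rho_zero bar D y i j.-1 /\
                    in_multZ (kk alpha beta y k i j.-1) (beta (y i)))
    & ((j < i)%N -> rho_zero bar D y j i.-1 /\
                    in_multZ (kk alpha beta y k j i.-1) (beta (y j)))].

(* Main.v *)
Require Import Defs.
From mathcomp Require Import all_boot all_order all_algebra.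
From mathcomp Require Import zify ring lra.
Set Implicit Arguments. Unset Strict Implicit. Unset Printing Implicit Defensive.
Import Order.TTheory GRing.Theory Num.Theory.
Local Open Scope ring_scope.

Definition dd (E : finType) (bar : E -> E) (y : nat -> E) (mu : nat) (e : E) : int :=
  ((y mu == e) : nat)%:Z - ((y mu == bar e) : nat)%:Z.

Definition SS (E : finType) (bar : E -> E) (y : nat -> E) (p q : nat) (e : E) : int :=
  \sum_(p.+1 <= mu < q.+1) dd bar y mu e.

Definition GG (E : finType) (bar : E -> E) (y : nat -> E) (p : nat) (e : E) : int :=
  SS bar y 0 p e + SS bar y 0 p.-1 e.

Lemma SS_split (E : finType) (bar : E -> E) y p q r e : (p <= q <= r)%N ->
  SS bar y p r e = SS bar y p q e + SS bar y q r e.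
Proof. move=> /andP[h1 h2]; rewrite /SS (big_cat_nat _ (n:=q.+1)) //. Qed.

Lemma SS_rec (E : finType) (bar : E -> E) y p q e : (p <= q)%N ->
  SS bar y p q.+1 e = SS bar y p q e + dd bar y q.+1 e.
Proof. by move=> h; rewrite /SS big_nat_recr. Qed.

Lemma SS0 (E : finType) (bar : E -> E) y p e : SS bar y p p e = 0.
Proof. by rewrite /SS big_geq. Qed.

Lemma dd_bar (E : finType) (bar : E -> E) y mu nu e : involutive bar ->
  y mu = bar (y nu) -> dd bar y mu e = - dd bar y nu e.
Proof.
move=> inv hy; rewrite /dd hy.
have bI : injective bar := inv_inj inv.
rewrite (inj_eq bI) -{1}(inv e) (inj_eq bI); lia.
Qed.

Lemma dd_bare (E : finType) (bar : E -> E) y mu e : involutive bar ->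
  dd bar y mu (bar e) = - dd bar y mu e.
Proof. move=> inv; rewrite /dd inv; lia. Qed.

Lemma SS_bare (E : finType) (bar : E -> E) y p q e : involutive bar ->
  SS bar y p q (bar e) = - SS bar y p q e.
Proof. move=> inv; rewrite /SS -sumrN; apply: eq_bigr => mu _; exact: dd_bare. Qed.

Lemma GG_rel (E : finType) (bar : E -> E) y p q e : involutive bar ->
  (1 <= p < q)%N -> y p = bar (y q) ->
  GG bar y q e = GG bar y p e + 2 * SS bar y p q.-1 e.
Proof.
move=> inv /andP[h1 h2] hy; rewrite /GG.
have hq : q = q.-1.+1 by lia.
have hp : p = p.-1.+1 by lia.
have e1 : SS bar y 0 q e = SS bar y 0 q.-1 e + dd bar y q e.
  by rewrite {1}hq SS_rec -?hq //; lia.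
have e2 : SS bar y 0 p e = SS bar y 0 p.-1 e + dd bar y p e.
  by rewrite {1}hp SS_rec -?hp //; lia.
have e3 : SS bar y 0 q.-1 e = SS bar y 0 p e + SS bar y p q.-1 e.
  by apply: SS_split; lia.
rewrite e1 e3 e2 (dd_bar e inv hy); ring.
Qed.

Definition rr (E : finType) (alpha beta : E -> int) (e : E) : rat :=
  (alpha e)%:~R / (beta e)%:~R.

Lemma rr_neq0 (E : finType) (alpha beta : E -> int) e :
  (forall e, alpha e != 0 /\ beta e != 0) -> rr alpha beta e != 0.
Proof.
move=> h; have [ha hb] := h e.
by rewrite /rr mulf_neq0 ?invr_neq0 // intr_eq0.
Qed.

Lemma rr_bar (E : finType) (bar : E -> E) (alpha beta : E -> int) e :
  involutive bar -> (forall e, alpha e = beta (bar e)) ->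
  rr alpha beta (bar e) = (rr alpha beta e)^-1.
Proof.
move=> inv hab; rewrite /rr invf_div hab inv -hab; done.
Qed.

Lemma step_D (E : finType) (bar : E -> E) (alpha beta : E -> int) (D : {set E}) y mu :
  is_orientation bar D -> involutive bar -> (forall y, bar y != y) ->
  (forall e, alpha e != 0 /\ beta e != 0) -> (forall e, alpha e = beta (bar e)) ->
  \prod_(e in D) rr alpha beta e ^ dd bar y mu e = rr alpha beta (y mu).
Proof.
move=> ori inv nfix nz hab.
have bI : injective bar := inv_inj inv.
case hx : (y mu \in D).
- rewrite (bigD1 (y mu)) //= big1 ?mulr1.
    rewrite /dd eqxx eq_sym (negbTE (nfix _)) /= subr0 expr1z //.
  move=> e /andP[eD ne]; rewrite /dd eq_sym (negbTE ne) /=.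
  case: eqP => [he|_]; last by rewrite subr0 expr0z.
  by move: hx; rewrite ori he inv eD.
- have hbx : bar (y mu) \in D by rewrite ori inv hx.
  rewrite (bigD1 (bar (y mu))) //= big1 ?mulr1.
    rewrite /dd inv eqxx eq_sym (negbTE (nfix _)) /= sub0r exprN1.
    by rewrite rr_bar // invrK.
  move=> e /andP[eD ne]; rewrite /dd.
  have -> : (y mu == e) = false by apply/negP => /eqP he; move: hx; rewrite he eD.
  have -> : (y mu == bar e) = false.
    by apply/negP => /eqP he; move: ne; rewrite he inv eqxx.
  by rewrite subr0 expr0z.
Qed.

Lemma prod_D (E : finType) (bar : E -> E) (alpha beta : E -> int) (D : {set E}) y p q :
  is_orientation bar D -> involutive bar -> (forall y, bar y != y) ->
  (forall e, alpha e != 0 /\ beta e != 0) -> (forall e, alpha e = beta (bar e)) ->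
  (p <= q)%N ->
  \prod_(p.+1 <= mu < q.+1) rr alpha beta (y mu)
   = \prod_(e in D) rr alpha beta e ^ SS bar y p q e.
Proof.
move=> ori inv nfix nz hab.
elim: q => [|q IH] hpq.
  have -> : p = 0%N by move: hpq; rewrite leqn0 => /eqP.
  by rewrite big_geq // big1 // => e _; rewrite SS0 expr0z.
case: (ltngtP p q.+1) => h; [|by lia|by rewrite h big_geq // big1 // => e _; rewrite SS0 expr0z].
rewrite big_nat_recr /=; last by lia.
rewrite IH; last by lia.
rewrite -(step_D y q.+1 ori inv nfix nz hab) -big_split /=.
apply: eq_bigr => e _; rewrite SS_rec; last by lia.
have hr : rr alpha beta e != 0 by apply: rr_neq0.
by rewrite (@expfzDr _ _ (SS bar y p q e) (dd bar y q.+1 e) hr).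
Qed.

Lemma prod_one (E : finType) (bar : E -> E) (alpha beta : E -> int) (D : {set E}) y p q :
  is_orientation bar D -> involutive bar -> (forall y, bar y != y) ->
  (forall e, alpha e != 0 /\ beta e != 0) -> (forall e, alpha e = beta (bar e)) ->
  (p <= q)%N -> (forall e, SS bar y p q e = 0) ->
  \prod_(p.+1 <= mu < q.+1) rr alpha beta (y mu) = 1.
Proof.
move=> ori inv nfix nz hab hpq h0.
rewrite (prod_D _ ori) // big1 // => e _; by rewrite h0 expr0z.
Qed.

Definition TT (E : finType) (alpha beta : E -> int) (y : nat -> E) (nu : nat) : rat :=
  \prod_(1 <= mu < nu.+1) rr alpha beta (y mu).

Definition KK (E : finType) (alpha beta : E -> int) (y : nat -> E) (k : nat -> int) (q : nat) : rat :=
  \sum_(0 <= nu < q) (k nu)%:~R * TT alpha beta y nu.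

Lemma TT_split (E : finType) (alpha beta : E -> int) y p nu : (p <= nu)%N ->
  TT alpha beta y nu = TT alpha beta y p * \prod_(p.+1 <= mu < nu.+1) rr alpha beta (y mu).
Proof. by move=> h; rewrite /TT (big_cat_nat _ (n:=p.+1)). Qed.

Lemma TT_neq0 (E : finType) (alpha beta : E -> int) y nu :
  (forall e, alpha e != 0 /\ beta e != 0) -> TT alpha beta y nu != 0.
Proof.
move=> nz; rewrite /TT big_seq_cond prodf_seq_neq0; apply/allP => mu _.
by apply/implyP => _; apply: rr_neq0.
Qed.

Lemma kk_eq (E : finType) (alpha beta : E -> int) y k p q : (p < q)%N ->
  kk alpha beta y k p q.-1 * TT alpha beta y p = KK alpha beta y k q - KK alpha beta y k p.
Proof.
move=> h; rewrite /kk prednK; last by lia.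
rewrite /KK (big_cat_nat _ (n:=p) (m:=0%N) (p:=q)) //=; last by lia.
rewrite addrC addrK mulr_suml; apply: eq_big_nat => nu /andP[h1 h2].
rewrite (TT_split alpha beta y h1) /rr; ring.
Qed.

Definition LL (E : finType) (alpha beta : E -> int) (y : nat -> E) (p : nat) : rat :=
  (beta (y p))%:~R * TT alpha beta y p.

Definition QQ (E : finType) (bar : E -> E) (alpha beta : E -> int) n y k p q : Prop :=
  [/\ (1 <= p <= n)%N, (1 <= q <= n)%N, (forall e, GG bar y p e = GG bar y q e),
      LL alpha beta y p = LL alpha beta y q &
      exists m : int, KK alpha beta y k q - KK alpha beta y k p = m%:~R * LL alpha beta y p].

Lemma QQ_sym (E : finType) (bar : E -> E) (alpha beta : E -> int) n y k p q :
  QQ bar alpha beta n y k p q -> QQ bar alpha beta n y k q p.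
Proof.
case=> h1 h2 hG hL [m hm]; split => //.
exists (- m); rewrite -hL rmorphN /= mulNr -hm; ring.
Qed.

Lemma QQ_trans (E : finType) (bar : E -> E) (alpha beta : E -> int) n y k p q s :
  QQ bar alpha beta n y k p q -> QQ bar alpha beta n y k q s -> QQ bar alpha beta n y k p s.
Proof.
case=> h1 h2 hG hL [m hm] [_ h3 hG' hL' [m' hm']]; split => //; try (by move=> e; rewrite hG hG'); try (by rewrite hL hL').
rewrite -hL in hm'.
exists (m + m'); rewrite rmorphD /= mulrDl -hm -hm'; ring.
Qed.

Lemma toQQ (E : finType) (bar : E -> E) (alpha beta : E -> int) (D : {set E}) n y k p q :
  is_orientation bar D -> involutive bar -> (forall y, bar y != y) ->
  (forall e, alpha e != 0 /\ beta e != 0) -> (forall e, alpha e = beta (bar e)) ->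
  (1 <= p <= n)%N -> (1 <= q <= n)%N -> y p = bar (y q) -> (p < q)%N ->
  rho_zero bar D y p q.-1 -> in_multZ (kk alpha beta y k p q.-1) (beta (y p)) ->
  QQ bar alpha beta n y k p q.
Proof.
move=> ori inv nfix nz hab hp hq hy hpq hr [m hm].
have hS : forall e, SS bar y p q.-1 e = 0.
  move=> e; case eD : (e \in D).
    by have := hr e; rewrite /rho eD.
  have beD : bar e \in D by rewrite ori inv eD.
  have := hr (bar e); rewrite /rho beD -/(SS bar y p q.-1 (bar e)) SS_bare //.
  by move=> /eqP; rewrite oppr_eq0 => /eqP.
split => //.
- by move=> e; rewrite (GG_rel e inv _ hy) ?hS ?mulr0 ?addr0 //; lia.
- have hT1 : TT alpha beta y q.-1 = TT alpha beta y p.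
    rewrite (TT_split alpha beta y (p:=p)); last by lia.
    by rewrite (@prod_one _ bar alpha beta D y p q.-1) ?mulr1 //; lia.
  have hT2 : TT alpha beta y q = TT alpha beta y q.-1 * rr alpha beta (y q).
    have {1}-> : q = q.-1.+1 by lia.
    rewrite /TT big_nat_recr //= prednK //; lia.
  have hbq : (beta (y q))%:~R != 0 :> rat by rewrite intr_eq0; case: (nz (y q)).
  rewrite /LL hT2 hT1 /rr hy -hab.
  by field.
- exists m; rewrite -kk_eq // hm intrM /LL; ring.
Qed.

Lemma fromQQ (E : finType) (bar : E -> E) (alpha beta : E -> int) (D : {set E}) n y k p q :
  involutive bar -> (forall e, alpha e != 0 /\ beta e != 0) ->
  QQ bar alpha beta n y k p q -> y p = bar (y q) -> (p < q)%N ->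
  rho_zero bar D y p q.-1 /\ in_multZ (kk alpha beta y k p q.-1) (beta (y p)).
Proof.
move=> inv nz [hp hq hG hL [m hm]] hy hpq; split.
- move=> e; rewrite /rho; case: (e \in D) => //.
  have := GG_rel e inv _ hy; rewrite hG -/(SS bar y p q.-1 e).
  move=> h; have : (1 <= p < q)%N by lia.
  move=> /h; lia.
- have hT : TT alpha beta y p != 0 by apply: TT_neq0.
  exists m; apply: (mulIf hT).
  by rewrite kk_eq // hm intrM /LL mulrA.
Qed.

Lemma simC_QQ (E : finType) (bar : E -> E) (alpha beta : E -> int) (D : {set E}) n y k p q :
  is_orientation bar D -> involutive bar -> (forall y, bar y != y) ->
  (forall e, alpha e != 0 /\ beta e != 0) -> (forall e, alpha e = beta (bar e)) ->
  simC bar alpha beta D n y k p q -> QQ bar alpha beta n y k p q.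
Proof.
move=> ori inv nfix nz hab [hp hq hy h1 h2].
case: (ltngtP p q) => h.
- by have [r1 r2] := h1 h; apply: (toQQ ori).
- have [r1 r2] := h2 h; apply: QQ_sym; apply: (toQQ ori) => //.
  by rewrite hy inv.
- by move: hy; rewrite h => /eqP; rewrite eq_sym (negbTE (nfix _)).
Qed.

Theorem lemma3p4 (V E : finType) (iota tau : E -> V) (bar : E -> E)
    (alpha beta : E -> int) (D : {set E})
    (n : nat) (a : nat -> V) (y : nat -> E) (k : nat -> int)
    (i l m j : nat) :
  is_GBS iota tau bar alpha beta ->
  is_orientation bar D ->
  is_factorization iota tau n a y ->
  simC bar alpha beta D n y k i l ->
  simC bar alpha beta D n y k l m ->
  simC bar alpha beta D n y k m j ->
  simC bar alpha beta D n y k i j.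
Proof.
move=> [_ [_ [inv nfix _ nz hab]]] ori _ H1 H2 H3.
have Q1 := simC_QQ ori inv nfix nz hab H1.
have Q2 := simC_QQ ori inv nfix nz hab H2.
have Q3 := simC_QQ ori inv nfix nz hab H3.
have Q := QQ_trans (QQ_trans Q1 Q2) Q3.
case: H1 H2 H3 => hi _ y1 _ _ [_ _ y2 _ _] [_ hj y3 _ _].
have hy : y i = bar (y j) by rewrite y1 y2 inv y3.
split => // hlt.
- exact: (@fromQQ _ bar alpha beta D n y k i j inv nz Q hy hlt).
- apply: (@fromQQ _ bar alpha beta D n y k j i inv nz (QQ_sym Q)) => //; by rewrite hy inv.
Qed.
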